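(* Let $n,k\in \mathbb{N}$ with $k \geq 2$ and $\Sigma=\{1,\dots,k\}$. Then (a) if $n$ is even, $|L^{\mathrm{even}}_{n,k}| \geq k^n \cdot 2^{1-k}$; (b) if $n \geq k \ln k$, then $|L^{q}_{n,k}| \leq k^n \cdot 2^{2-k}$ for every $q \in \{0,1\}^k$.
   Context: For $q=(q_1,\dots,q_k)\in\{0,1\}^k$, $L^{q}_{n,k}=\{w\in\Sigma^n : |w|_j\equiv q_j \pmod 2 \text{ for all } j\in\Sigma\}$, where $|w|_j$ is the number of occurrences of letter $j$ in $w$; $L^{\mathrm{even}}_{n,k}=L^{\vec 0}_{n,k}$ is the set of words in $\Sigma^n$ in which every letter occurs an even number of times. *)

(* Defs.v *)
From mathcomp Require Import all_boot.
From Stdlib Require Import Reals.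
Set Implicit Arguments. Unset Strict Implicit. Unset Printing Implicit Defensive.

(* Alphabet Sigma = {1,...,k} is represented by 'I_k; words of length n are
   n.-tuples over 'I_k.  |w|_j = count_mem j w. *)
Definition L_par (n k : nat) (q : {ffun 'I_k -> bool}) : {set n.-tuple 'I_k} :=
  [set w : n.-tuple 'I_k | [forall j : 'I_k, odd (count_mem j w) == q j]].

Definition L_even (n k : nat) : {set n.-tuple 'I_k} :=
  L_par n [ffun _ => false].

(* Main.v *)
Require Import Defs.
From mathcomp Require Import all_boot.
From Stdlib Require Import Reals.
From Stdlib Require Import Lra Lia.
From mathcomp Require Import zify.
From mathcomp Require all_order all_algebra.

Module HR.
Local Open Scope R_scope.
Lemma ln_le_inv x y : 0 < x -> 0 < y -> ln x <= ln y -> x <= y.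
Proof.
intros Hx Hy H. destruct (Rle_lt_dec x y) as [h|h]; auto.
pose proof (ln_increasing y x Hy h). lra.
Qed.

Lemma key_R (k m n : nat) : (2 <= k)%coq_nat -> (1 <= m)%coq_nat -> (2 * m <= k)%coq_nat ->
  INR k * ln (INR k) <= INR n ->
  INR (k - 2 * m) ^ n * INR k ^ (2 * m) <= INR k ^ n.
Proof.
intros hk hm h2 hn.
assert (HK : 2 <= INR k) by (apply (le_INR 2); exact hk).
assert (HM : 1 <= INR m) by (apply (le_INR 1); exact hm).
assert (HL : 0 < ln (INR k)).
{ rewrite <- ln_1. apply ln_increasing; lra. }
assert (Ha : INR (k - 2 * m) = INR k - 2 * INR m).
{ rewrite (minus_INR _ _ h2) mult_INR. simpl. lra. }
assert (Hkn : 0 < INR k ^ n) by (apply pow_lt; lra).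
destruct (Nat.eq_dec k (2 * m)) as [e|e].
- assert (Ha0 : INR (k - 2 * m) = 0) by (rewrite e subnn; reflexivity).
  rewrite Ha0.
  assert (n <> 0%nat).
  { intro e0. rewrite e0 in hn. simpl in hn. nra. }
  rewrite pow_i. lra. lia.
- assert (Hapos : 0 < INR (k - 2 * m)).
  { apply lt_0_INR. lia. }
  set (K := INR k) in *. set (M := INR m) in *. set (L := ln K) in *.
  set (a := INR (k - 2 * m)) in *.
  assert (Hla : ln a <= L - 2 * M / K).
  { pose proof (exp_ineq1_le (ln (a / K))) as E.
    rewrite exp_ln in E; [|apply Rdiv_lt_0_compat; lra].
    unfold Rdiv in E. rewrite ln_mult in E; [|lra|apply Rinv_0_lt_compat; lra].
    rewrite ln_Rinv in E; [|lra].
    assert (a * / K = 1 - 2 * M / K) by (rewrite Ha; field; lra).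
    rewrite H in E. fold L in E. lra. }
  assert (HnK : L <= INR n / K).
  { apply (Rmult_le_reg_l K); [lra|]. field_simplify; lra. }
  apply ln_le_inv.
  + apply Rmult_lt_0_compat; apply pow_lt; lra.
  + exact Hkn.
  + rewrite ln_mult; [|apply pow_lt; lra|apply pow_lt; lra].
    rewrite !ln_pow; [|lra|lra|lra]. rewrite mult_INR. fold L. simpl (INR 2).
    assert (INR n * ln a <= INR n * (L - 2 * M / K)).
    { apply Rmult_le_compat_l; [apply pos_INR | exact Hla]. }
    assert (2 * M * L <= 2 * M * (INR n / K)) by (apply Rmult_le_compat_l; lra).
    assert (INR n * (2 * M / K) = 2 * M * (INR n / K)) by (field; lra).
    fold M. lra.
Qed.

Lemma R2_R (k : nat) : (2 <= k)%coq_nat -> (1 + INR k ^ 2) ^ k <= 2 * INR k ^ (2 * k).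
Proof.
intros hk.
assert (HK : 2 <= INR k) by (apply (le_INR 2); exact hk).
set (K := INR k) in *.
assert (E : (1 + K ^ 2) ^ k = K ^ (2 * k) * (1 + / K ^ 2) ^ k).
{ rewrite pow_mult -Rpow_mult_distr. f_equal. field. lra. }
rewrite E.
assert (Hb : (1 + / K ^ 2) ^ k <= 2).
{ apply ln_le_inv.
  - apply pow_lt. assert (0 < / K ^ 2) by (apply Rinv_0_lt_compat; nra). lra.
  - lra.
  - assert (0 < / K ^ 2) by (apply Rinv_0_lt_compat; nra).
    rewrite ln_pow; [|lra].
    pose proof (exp_ineq1_le (ln (1 + / K ^ 2))) as E1.
    rewrite exp_ln in E1; [|lra].
    fold K.
    assert (K * ln (1 + / K ^ 2) <= K * / K ^ 2).
    { apply Rmult_le_compat_l; lra. }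
    assert (K * / K ^ 2 = / K) by (field; lra).
    assert (/ K <= / 2) by (apply Rinv_le_contravar; lra).
    pose proof ln_lt_2. lra. }
assert (0 < K ^ (2 * k)) by (apply pow_lt; lra).
nra.
Qed.

End HR.

Module H.
Import all_order all_algebra.
Import ssrnat.
Import Order.TTheory GRing.Theory Num.Theory.

Lemma expnE' a b : Nat.pow a b = expn a b.
Proof. elim: b => [|b IH] //=; by rewrite IH expnS. Qed.

Lemma key_nat (k m n : nat) : (2 <= k)%N -> (1 <= m)%N -> (2 * m <= k)%N ->
  Rle (Rmult (INR k) (ln (INR k))) (INR n) ->
  ((k - 2 * m) ^ n * k ^ (2 * m) <= k ^ n)%N.
Proof.
move=> /ssrnat.leP hk /ssrnat.leP hm /ssrnat.leP h2 hn; apply/ssrnat.leP; apply: INR_le.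
rewrite mult_INR -!expnE' !pow_INR; exact: HR.key_R.
Qed.

Lemma R2_nat (k : nat) : (2 <= k)%N -> ((1 + k ^ 2) ^ k <= 2 * k ^ (2 * k))%N.
Proof.
move=> /ssrnat.leP hk; apply/ssrnat.leP; apply: INR_le.
rewrite mult_INR -!expnE' !pow_INR plus_INR pow_INR; exact: HR.R2_R.
Qed.

Local Open Scope ring_scope.

Lemma prod_seq_count (k : nat) (F : 'I_k -> int) (w : seq 'I_k) :
  \prod_(x <- w) F x = \prod_(j < k) F j ^+ count_mem j w.
Proof.
elim: w => [|a w IH]; first by rewrite big_nil big1 // => j _; rewrite expr0.
rewrite big_cons IH /=.
have -> : \prod_(j < k) F j ^+ ((a == j) + count_mem j w)%N =
   \prod_(j < k) F j ^+ (a == j) * \prod_(j < k) F j ^+ count_mem j w.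
  by rewrite -big_split /=; apply: eq_bigr => j _; rewrite exprD.
congr (_ * _); rewrite (bigD1 a) //= eqxx expr1 big1 ?mulr1 // => j /negPf.
by rewrite eq_sym => ->; rewrite expr0.
Qed.

Lemma pow_sum_tuples (k n : nat) (a : 'I_k -> int) :
  (\sum_(j < k) a j) ^+ n = \sum_(w : n.-tuple 'I_k) \prod_(x <- w) a x.
Proof.
have -> : (\sum_(j < k) a j) ^+ n = \prod_(i < n) \sum_(j < k) a j.
  by rewrite prodr_const card_ord.
rewrite bigA_distr_bigA /=.
rewrite (reindex (fun w : n.-tuple 'I_k => [ffun i => tnth w i])) /=.
  apply: eq_bigr => w _; rewrite big_tuple; apply: eq_bigr => i _; by rewrite ffunE.
exists (fun f : {ffun 'I_n -> 'I_k} => [tuple f i | i < n]) => [w _|f _].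
  by apply: eq_from_tnth => i; rewrite tnth_mktuple ffunE.
by apply/ffunP => i; rewrite ffunE tnth_mktuple.
Qed.

Lemma sum_ffun_prod (k : nat) (y : 'I_k -> int) :
  \sum_(s : {ffun 'I_k -> bool}) \prod_(j < k) (if s j then y j else 1)
  = \prod_(j < k) (1 + y j).
Proof.
rewrite (_ : \prod_(j < k) (1 + y j) =
  \prod_(j < k) \sum_(b : bool) (if b then y j else 1)).
  by rewrite bigA_distr_bigA.
by apply: eq_bigr => j _; rewrite big_bool /= addrC.
Qed.

Lemma prod_if2 (k : nat) (P : 'I_k -> bool) :
  \prod_(j < k) (if P j then 2 else 0 : int) = if [forall j, P j] then 2 ^+ k else 0.
Proof.
case: ifP => [/forallP H|/negbT].
  by rewrite -[k in RHS]card_ord -prodr_const; apply: eq_bigr => j _; rewrite H.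
rewrite negb_forall => /existsP [j /negPf Hj].
by rewrite (bigD1 j) //= Hj mul0r.
Qed.

Definition sig_ {k : nat} (s : {ffun 'I_k -> bool}) : int :=
  \sum_(j < k) (-1) ^+ (s j).
Definition chi_ {k : nat} (q s : {ffun 'I_k -> bool}) : int :=
  \prod_(j < k) (if s j then (-1) ^+ (q j) else 1).

Lemma identity (n k : nat) (q : {ffun 'I_k -> bool}) :
  (#|L_par n q| * 2 ^ k)%:R = \sum_s chi_ q s * sig_ s ^+ n :> int.
Proof.
under eq_bigr do rewrite /sig_ pow_sum_tuples mulr_sumr.
rewrite exchange_big /=.
have H : forall w : n.-tuple 'I_k,
  \sum_(s : {ffun 'I_k -> bool}) chi_ q s * \prod_(x <- w) (-1) ^+ (s x)
  = if w \in L_par n q then 2 ^+ k else 0.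
  move=> w.
  transitivity (\prod_(j < k) (1 + (-1) ^+ (q j + odd (count_mem j w))%N : int)).
    rewrite -sum_ffun_prod; apply: eq_bigr => s _.
    rewrite prod_seq_count /chi_ -big_split /=; apply: eq_bigr => j _.
    case: (s j); last by rewrite expr0 expr1n mulr1.
    rewrite (_ : (-1) ^+ true = -1 :> int) // -exprD.
    by rewrite -[LHS]signr_odd -[RHS]signr_odd !oddD !oddb.
  rewrite inE -prod_if2; apply: eq_bigr => j _.
  by case: (q j); case: (odd _).
rewrite (eq_bigr _ (fun w _ => H w)) -big_mkcond /= sumr_const.
by rewrite natrM natrX mulr_natl.
Qed.


Lemma sum_ffun_prod_nat (k y z : nat) :
  (\sum_(s : {ffun 'I_k -> bool}) \prod_(j < k) (if s j then y else z) = (y + z) ^ k)%N.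
Proof.
rewrite (_ : ((y + z) ^ k)%N = \prod_(j < k) \sum_(b : bool) (if b then y else z))%N.
  by rewrite bigA_distr_bigA.
by rewrite big_bool /= prod_nat_const card_ord.
Qed.

Definition cT {k : nat} (s : {ffun 'I_k -> bool}) : nat := (\sum_(j < k) s j)%N.
Definition cF {k : nat} (s : {ffun 'I_k -> bool}) : nat := (\sum_(j < k) ~~ s j)%N.

Lemma cTF {k : nat} (s : {ffun 'I_k -> bool}) : (cF s + cT s)%N = k.
Proof.
rewrite /cF /cT -big_split /=.
rewrite (eq_bigr (fun _ => 1%N)); last by move=> j _; rewrite addn_negb.
by rewrite sum_nat_const card_ord muln1.
Qed.

Lemma sig_TF {k : nat} (s : {ffun 'I_k -> bool}) : sig_ s = (cF s)%:R - (cT s)%:R.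
Proof.
rewrite /sig_ /cF /cT !natr_sum -sumrB; apply: eq_bigr => j _.
by case: (s j).
Qed.

Definition tt_ {k : nat} (s : {ffun 'I_k -> bool}) : nat :=
  if (cT s <= cF s)%N then (cF s - cT s)%N else (cT s - cF s)%N.

Lemma norm_sig {k : nat} (s : {ffun 'I_k -> bool}) : `|sig_ s| = (tt_ s)%:R.
Proof.
rewrite sig_TF /tt_; case: (leqP (cT s) (cF s)) => h.
  by rewrite -natrB // normr_nat.
by rewrite -opprB -natrB ?(ltnW h) // normrN normr_nat.
Qed.

Lemma half_bound (k n a b : nat) : (2 <= k)%N -> (a + b)%N = k -> (b <= a)%N ->
  Rle (Rmult (INR k) (ln (INR k))) (INR n) ->
  ((a - b) ^ n * k ^ (2 * k) <= k ^ n * k ^ (2 * a))%N.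
Proof.
move=> hk hab hba hn.
have E : (k ^ (2 * k) = k ^ (2 * b) * k ^ (2 * a))%N by rewrite -expnD -mulnDr addnC hab.
rewrite E mulnA leq_mul2r; apply/orP; right.
case: b hab hba E => [|b] hab hba E.
  by rewrite subn0 muln1 -hab addn0.
rewrite (_ : (a - b.+1 = k - 2 * b.+1)%N); last by lia.
apply: key_nat => //; lia.
Qed.

Lemma s_bound (k n : nat) (s : {ffun 'I_k -> bool}) : (2 <= k)%N ->
  Rle (Rmult (INR k) (ln (INR k))) (INR n) ->
  (tt_ s ^ n * k ^ (2 * k) <= k ^ n * (k ^ (2 * cF s) + k ^ (2 * cT s)))%N.
Proof.
move=> hk hn; rewrite /tt_ mulnDr; case: (leqP (cT s) (cF s)) => h.
  apply: (leq_trans _ (leq_addr _ _)); apply: half_bound => //; exact: cTF.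
apply: (leq_trans _ (leq_addl _ _)); apply: half_bound => //; [rewrite addnC; exact: cTF| exact: ltnW].
Qed.

Lemma sum_pow_cF (k x : nat) :
  (\sum_(s : {ffun 'I_k -> bool}) x ^ cF s = (1 + x) ^ k)%N.
Proof.
rewrite -sum_ffun_prod_nat; apply: eq_bigr => s _.
rewrite /cF expn_sum; apply: eq_bigr => j _; by case: (s j).
Qed.

Lemma sum_pow_cT (k x : nat) :
  (\sum_(s : {ffun 'I_k -> bool}) x ^ cT s = (x + 1) ^ k)%N.
Proof.
rewrite -sum_ffun_prod_nat; apply: eq_bigr => s _.
rewrite /cT expn_sum; apply: eq_bigr => j _; by case: (s j).
Qed.

Lemma sum_tt (k n : nat) : (2 <= k)%N ->
  Rle (Rmult (INR k) (ln (INR k))) (INR n) ->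
  (\sum_(s : {ffun 'I_k -> bool}) tt_ s ^ n <= 4 * k ^ n)%N.
Proof.
move=> hk hn.
have kp : (0 < k ^ (2 * k))%N by rewrite expn_gt0; lia.
rewrite -(leq_pmul2r kp) big_distrl /=.
have HH := (@leq_sum _ (index_enum _) xpredT _ _ (fun s _ => @s_bound k n s hk hn)).
apply: (leq_trans HH).
have E : (k ^ n * \sum_(s : {ffun 'I_k -> bool}) (k ^ (2 * cF s) + k ^ (2 * cT s)) =
  \sum_(s : {ffun 'I_k -> bool}) k ^ n * (k ^ (2 * cF s) + k ^ (2 * cT s)))%N by rewrite big_distrr.
rewrite -E big_split /=.
have S1 : (\sum_(s : {ffun 'I_k -> bool}) k ^ (2 * cF s) = (1 + k ^ 2) ^ k)%N.
  by under eq_bigr do rewrite expnM; rewrite sum_pow_cF.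
have S2 : (\sum_(s : {ffun 'I_k -> bool}) k ^ (2 * cT s) = (1 + k ^ 2) ^ k)%N.
  by under eq_bigr do rewrite expnM; rewrite sum_pow_cT addnC.
rewrite S1 S2.
have h := R2_nat k hk.
rewrite -mulnA (mulnC 4%N) -mulnA leq_mul2l; apply/orP; right.
lia.
Qed.

Lemma part_b (n k : nat) (hk : (2 <= k)%N) (q : {ffun 'I_k -> bool}) :
  Rle (Rmult (INR k) (ln (INR k))) (INR n) ->
  (#|L_par n q| * 2 ^ k <= 4 * k ^ n)%N.
Proof.
move=> hn; apply: leq_trans (sum_tt k n hk hn).
rewrite -(ler_nat int) identity natr_sum.
apply: (le_trans (ler_norm _)); apply: (le_trans (ler_norm_sum _ _ _)).
apply: ler_sum => s _; rewrite normrM normrX norm_sig natrX.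
rewrite (_ : `|chi_ q s| = 1) ?mul1r //.
rewrite /chi_ normr_prod big1 // => j _.
by case: (s j); rewrite ?normr1 // normrX normrN1 expr1n.
Qed.

Lemma part_a (n k : nat) (hk : (2 <= k)%N) : ~~ odd n ->
  (2 * k ^ n <= #|L_even n k| * 2 ^ k)%N.
Proof.
move=> hn.
rewrite -(ler_nat int) identity.
set s0 : {ffun 'I_k -> bool} := [ffun => false].
set s1 : {ffun 'I_k -> bool} := [ffun => true].
have chi1 : forall s : {ffun 'I_k -> bool}, chi_ s0 s = 1.
  move=> s; rewrite /chi_ big1 // => j _; by rewrite ffunE; case: (s j).
have n01 : s1 != s0.
  apply/negP => /eqP /ffunP /(_ (Ordinal (ltn_trans (ltn0Sn 0) hk))); by rewrite !ffunE.
rewrite (bigD1 s0) //= (bigD1 s1) //= !chi1 !mul1r addrA.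
have -> : sig_ s0 = k%:R.
  by rewrite /sig_ (eq_bigr (fun _ => 1)) ?sumr_const ?card_ord // => j _; rewrite ffunE.
have -> : sig_ s1 = - k%:R.
  rewrite /sig_ (eq_bigr (fun _ => -1)) ?sumr_const ?card_ord ?mulNrn //.
  by move=> j _; rewrite ffunE.
rewrite exprNn -signr_odd (negbTE hn) expr0 mul1r natrM natrX.
rewrite mulrDl mul1r lerDl; apply: sumr_ge0 => s _; rewrite chi1 mul1r exprn_even_ge0 //.
Qed.

End H.

Theorem lemma7p4 (n k : nat) (hk : 2 <= k) :
  (~~ odd n -> k ^ n <= #|L_even n k| * 2 ^ (k - 1)) /\
  ((INR k * ln (INR k) <= INR n)%R ->
     forall q : {ffun 'I_k -> bool}, #|L_par n q| * 2 ^ (k - 2) <= k ^ n).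
Proof.
split.
- move=> hn; have h := H.part_a n k hk hn.
  rewrite !H.expnE'.
  have e : expn 2 k = muln 2 (expn 2 (k - 1)) by rewrite -expnS subn1 prednK // ltnW.
  rewrite e mulnCA leq_pmul2l // in h.
- move=> hn q; have h := H.part_b n k hk q hn.
  rewrite !H.expnE'.
  have e : expn 2 k = muln 4 (expn 2 (k - 2)).
    by rewrite (_ : 4 = expn 2 2) // -expnD subnKC.
  rewrite e mulnCA leq_pmul2l // in h.
Qed.
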